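(* Qualitative invariability may fail for multifold edges under monotonic semantics: there exist a gradual semantics $\sigma$ satisfying monotonicity on all acyclic QBAFs, an acyclic QBAF $\mathcal{Q}=\langle\mathcal{A},\mathcal{R}^-,\mathcal{R}^+,\tau\rangle$, an argument $\alpha\in\mathcal{A}$ and an edge $r=(\beta,\gamma)\in\mathcal{R}$ multifold w.r.t. $\alpha$, such that either $\phi^\alpha_\sigma(r)>0$ and $\phi_\delta<0$ for some $\delta\in[0,1]$, or $\phi^\alpha_\sigma(r)<0$ and $\phi_\delta>0$ for some $\delta\in[0,1]$; here $\phi_\delta$ denotes $\phi^\alpha_\sigma(r)$ computed in $\langle\mathcal{A},\mathcal{R}^-,\mathcal{R}^+,\tau_\delta\rangle$ with $\tau_\delta(\beta)=\delta$ and $\tau_\delta=\tau$ on $\mathcal{A}\setminus\{\beta\}$.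
   Context: A QBAF is a quadruple $\mathcal{Q}=\langle\mathcal{A},\mathcal{R}^-,\mathcal{R}^+,\tau\rangle$ with $\mathcal{A}$ a finite set of arguments, $\mathcal{R}^-,\mathcal{R}^+\subseteq\mathcal{A}\times\mathcal{A}$ disjoint attack and support relations, and $\tau:\mathcal{A}\to[0,1]$ base scores; $\mathcal{R}=\mathcal{R}^-\cup\mathcal{R}^+$, $\mathcal{R}(\beta)=\{(\beta,\gamma)\in\mathcal{R}\}$; acyclic means $(\mathcal{A},\mathcal{R})$ has no directed cycle. A gradual semantics $\sigma$ assigns strengths in $[0,1]$ to arguments of QBAFs. For $\mathcal{S}\subseteq\mathcal{R}$, $\sigma_{\mathcal{S}}(\alpha)$ is the strength of $\alpha$ in $\langle\mathcal{A},\mathcal{R}^-\cap\mathcal{S},\mathcal{R}^+\cap\mathcal{S},\tau\rangle$; for $\tau':\mathcal{A}\to[0,1]$, $\sigma_{\tau'}(\alpha)$ is the strength of $\alpha$ in $\langle\mathcal{A},\mathcal{R}^-,\mathcal{R}^+,\tau'\rangle$. The RAE is $\phi^\alpha_\sigma(r)=\sum_{\mathcal{S}\subseteq\mathcal{R}\setminus\{r\}}\frac{(|\mathcal{R}|-|\mathcal{S}|-1)!|\mathcal{S}|!}{|\mathcal{R}|!}[\sigma_{\mathcal{S}\cup\{r\}}(\alpha)-\sigma_{\mathcal{S}}(\alpha)]$. $\sigma$ satisfies monotonicity on a class of QBAFs if for every QBAF in the class, every $\alpha,\beta\in\mathcal{A}$ with $\alpha\neq\beta$ and $\mathcal{R}(\beta)=\{(\beta,\alpha)\}$,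 and every $\tau':\mathcal{A}\to[0,1]$: (1) if $(\beta,\alpha)\in\mathcal{R}^-$ then $\sigma(\alpha)\le\sigma_{\mathcal{R}\setminus\{(\beta,\alpha)\}}(\alpha)$; (2) if $(\beta,\alpha)\in\mathcal{R}^+$ then $\sigma(\alpha)\ge\sigma_{\mathcal{R}\setminus\{(\beta,\alpha)\}}(\alpha)$; (3) if $(\beta,\alpha)\in\mathcal{R}^-$, $\tau(\beta)\le\tau'(\beta)$ and $\tau'=\tau$ on $\mathcal{A}\setminus\{\beta\}$, then $\sigma(\alpha)\ge\sigma_{\tau'}(\alpha)$; (4) if $(\beta,\alpha)\in\mathcal{R}^+$, $\tau(\beta)\le\tau'(\beta)$ and $\tau'=\tau$ on $\mathcal{A}\setminus\{\beta\}$, then $\sigma(\alpha)\le\sigma_{\tau'}(\alpha)$. A path from $\gamma$ to $\alpha$ is a finite sequence of edges $(x_0,x_1),\dots,(x_{k-1},x_k)\in\mathcal{R}$ with $x_0=\gamma$, $x_k=\alpha$. An edge $(\beta,\gamma)\in\mathcal{R}$ with $\beta\neq\alpha$ is multifold w.r.t. $\alpha$ if $\gamma\neq\alpha$ and there is more than one path from $\gamma$ to $\alpha$ in $\mathcal{Q}$. *)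

(* Defs.v *)
From HB Require Import structures.
From mathcomp Require Import all_boot all_order all_algebra.
From mathcomp Require Import reals.
Set Implicit Arguments. Unset Strict Implicit. Unset Printing Implicit Defensive.
Import Order.TTheory GRing.Theory Num.Theory.
Local Open Scope ring_scope.

(* A QBAF <A, Rm, Rp, tau> is represented by a finite type A of arguments,
   attack relation Rm, support relation Rp (sets of pairs) and base scores tau. *)

Definition qbaf_valid (R : realType) (A : finType) (Rm Rp : {set A * A})
    (tau : A -> R) : Prop :=
  Rm :&: Rp = set0 /\ (forall a, 0 <= tau a <= 1).

Definition edge_rel (A : finType) (Rm Rp : {set A * A}) : rel A :=
  fun x y => (x, y) \in Rm :|: Rp.

Definition acyclic (A : finType) (Rm Rp : {set A * A}) : Prop :=
  forall x y, edge_rel Rm Rp x y -> ~~ connect (edge_rel Rm Rp) y x.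

Definition semantics (R : realType) :=
  forall (A : finType), {set A * A} -> {set A * A} -> (A -> R) -> A -> R.

Definition sem_range (R : realType) (sigma : semantics R) : Prop :=
  forall (A : finType) Rm Rp (tau : A -> R) a,
    qbaf_valid Rm Rp tau -> 0 <= sigma A Rm Rp tau a <= 1.

Definition sigma_S (R : realType) (sigma : semantics R) (A : finType)
    (Rm Rp : {set A * A}) (tau : A -> R) (S : {set A * A}) (a : A) : R :=
  sigma A (Rm :&: S) (Rp :&: S) tau a.

Definition out_edges_single (A : finType) (Rm Rp : {set A * A}) (b a : A) :=
  [set e in Rm :|: Rp | e.1 == b] = [set (b, a)].

Definition monotonic_acyclic (R : realType) (sigma : semantics R) : Prop :=
  forall (A : finType) (Rm Rp : {set A * A}) (tau : A -> R),
    qbaf_valid Rm Rp tau -> acyclic Rm Rp ->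
    forall (a b : A), a != b -> out_edges_single Rm Rp b a ->
    forall tau' : A -> R, (forall x, 0 <= tau' x <= 1) ->
      let Rall := Rm :|: Rp in
      ((b, a) \in Rm ->
         sigma A Rm Rp tau a <= sigma_S sigma Rm Rp tau (Rall :\ (b, a)) a) /\
      ((b, a) \in Rp ->
         sigma A Rm Rp tau a >= sigma_S sigma Rm Rp tau (Rall :\ (b, a)) a) /\
      ((b, a) \in Rm -> tau b <= tau' b -> (forall x, x != b -> tau' x = tau x) ->
         sigma A Rm Rp tau a >= sigma A Rm Rp tau' a) /\
      ((b, a) \in Rp -> tau b <= tau' b -> (forall x, x != b -> tau' x = tau x) ->
         sigma A Rm Rp tau a <= sigma A Rm Rp tau' a).

Definition RAE (R : realType) (sigma : semantics R) (A : finType)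
    (Rm Rp : {set A * A}) (tau : A -> R) (a : A) (r : A * A) : R :=
  let Rall := Rm :|: Rp in
  \sum_(S : {set A * A} | S \subset Rall :\ r)
     (((#|Rall| - #|S| - 1)`! * #|S|`!)%:R / (#|Rall|`!)%:R) *
     (sigma_S sigma Rm Rp tau (r |: S) a - sigma_S sigma Rm Rp tau S a).

(* p is (the node sequence of) a path from g to a: the edges are
   (g, p_1), (p_1, p_2), ..., (p_{k-1}, p_k) with p_k = a.  Edge sequences
   and such node sequences are in bijection. *)
Definition is_path_to (A : finType) (Rm Rp : {set A * A}) (g a : A) (p : seq A) :=
  path (edge_rel Rm Rp) g p && (last g p == a).

Definition multifold (A : finType) (Rm Rp : {set A * A}) (a : A) (r : A * A) :=
  [/\ r \in Rm :|: Rp, r.1 != a, r.2 != a &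
      exists p1 p2, [/\ p1 != p2, is_path_to Rm Rp r.2 a p1 &
                        is_path_to Rm Rp r.2 a p2]].

Definition tau_upd (R : realType) (A : finType) (tau : A -> R) (b : A) (d : R) : A -> R :=
  fun x => if x == b then d else tau x.

(* Main.v *)
Require Import Defs.
From HB Require Import structures.
From mathcomp Require Import all_boot all_order all_algebra.
From mathcomp Require Import reals lra.
Import Order.TTheory GRing.Theory Num.Theory.
Set Implicit Arguments. Unset Strict Implicit. Unset Printing Implicit Defensive.
Local Open Scope ring_scope.

Definition pat (A : finType) (E : {set A * A}) (a b g : A) : bool :=
  [&& (b, g) \in E, (g, a) \in E & [exists x, ((g, x) \in E) && (x != a)]].

Definition sgnp (R : realType) (A : finType) (E : {set A * A}) (tau : A -> R) (a : A) : R :=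
  ([exists b, exists g, pat E a b g && (2^-1 < tau b)] : bool)%:R -
  ([exists b, exists g, pat E a b g && (tau b < 2^-1)] : bool)%:R.

Definition mysem (R : realType) : semantics R :=
  fun A Rm Rp tau a => tau a / 2 + 4^-1 + sgnp (Rm :|: Rp) tau a / 4.

Lemma sgnp_range (R : realType) (A : finType) E (tau : A -> R) a :
  -1 <= sgnp E tau a <= 1.
Proof.
rewrite /sgnp; case: [exists b, _]; case: [exists b, _] => /=; apply/andP; split; lra.
Qed.

Lemma mysem_range (R : realType) : sem_range (@mysem R).
Proof.
move=> A Rm Rp tau a [_ /(_ a) /andP [h0 h1]].
have /andP [s0 s1] := sgnp_range (Rm :|: Rp) tau a.
rewrite /mysem; apply/andP; split; lra.
Qed.

Section Mono.
Variables (A : finType) (E : {set A * A}) (a b' : A).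
Hypothesis noloop : (a, a) \notin E.
Hypothesis single : forall v, (b', v) \in E -> v = a.

Lemma pat_rem b g : pat (E :\ (b', a)) a b g = pat E a b g.
Proof.
rewrite /pat; apply/idP/idP.
  move=> /and3P [h1 h2 /existsP [x hx]]; move: h1 h2 hx.
  rewrite !inE => /andP [_ ->] /andP [_ ->] /andP [/andP [_ h] hx].
  apply/existsP; exists x; by rewrite h.
case/and3P => hbg hga /existsP [x /andP [hgx hx]].
have gb : g != b'.
  by apply/eqP => e; subst g; move: (single hgx) hx => ->; rewrite eqxx.
apply/and3P; split; rewrite ?inE.
- rewrite hbg andbT; apply/negP => /eqP [_ e]; subst g.
  by move: noloop; rewrite hga.
- by rewrite hga andbT xpair_eqE (negbTE gb).
- apply/existsP; exists x; rewrite !inE hgx hx /= andbT xpair_eqE.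
  by rewrite (negbTE hx) andbF.
Qed.

Lemma pat_nb b g : pat E a b g -> b != b'.
Proof.
case/and3P => hbg hga _; apply/eqP => e; subst b.
move: (single hbg) => e; subst g; by move: noloop; rewrite hga.
Qed.

Lemma sgnp_eq (R : realType) (tau tau' : A -> R) :
  (forall x, x != b' -> tau' x = tau x) ->
  sgnp (E :\ (b', a)) tau a = sgnp E tau a /\ sgnp E tau' a = sgnp E tau a.
Proof.
move=> ht; split.
  rewrite /sgnp; congr (_%:R - _%:R); congr (nat_of_bool _);
    apply: eq_existsb => b /=; apply: eq_existsb => g /=; by rewrite pat_rem.
rewrite /sgnp; congr (_%:R - _%:R); congr (nat_of_bool _); apply: eq_existsb => b /=;
  apply: eq_existsb => g /=;
  case h: (pat E a b g) => //=; by rewrite ht // (pat_nb h).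
Qed.
End Mono.

Lemma mysem_mono (R : realType) : monotonic_acyclic (@mysem R).
Proof.
move=> A Rm Rp tau _ acy a b ab hs tau' _ /=.
set E := Rm :|: Rp.
have noloop : (a, a) \notin E.
  apply/negP => h; have := acy a a h; by rewrite connect0.
have single : forall v, (b, v) \in E -> v = a.
  move=> v hv; have : (b, v) \in [set e in E | e.1 == b] by rewrite inE hv eqxx.
  by rewrite hs inE => /eqP [].
have eE : Rm :&: (E :\ (b, a)) :|: Rp :&: (E :\ (b, a)) = E :\ (b, a).
  by rewrite -setIUl; apply/setIidPr; rewrite subD1set.
have H1 := @sgnp_eq A E a b noloop single R tau tau.
have [H1' _] := H1 (fun _ _ => erefl).
rewrite /sigma_S /mysem eE -/E H1'.
split; first by [].
split; first by [].
split=> _ _ ht; have [_ H2] := @sgnp_eq A E a b noloop single R tau tau' ht;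
  rewrite H2 ht // lexx.
Qed.
Definition n0 : 'I_4 := @Ordinal 4 0 isT.
Definition n1 : 'I_4 := @Ordinal 4 1 isT.
Definition n2 : 'I_4 := @Ordinal 4 2 isT.
Definition n3 : 'I_4 := @Ordinal 4 3 isT.
Definition Rp0 : {set 'I_4 * 'I_4} := [set (n0,n1); (n1,n2); (n1,n3); (n2,n3)].
Definition Rm0 : {set 'I_4 * 'I_4} := set0.

Lemma ord4 (u : 'I_4) : [\/ u = n0, u = n1, u = n2 | u = n3].
Proof.
case: u => [[|[|[|[|?]]]] hu].
- by apply: Or41; apply: val_inj.
- by apply: Or42; apply: val_inj.
- by apply: Or43; apply: val_inj.
- by apply: Or44; apply: val_inj.
- by [].
Qed.

Lemma lt_edge u v : edge_rel Rm0 Rp0 u v -> (u < v)%N.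
Proof.
rewrite /edge_rel !inE.
by case: (ord4 u) => ->; case: (ord4 v) => ->.
Qed.

Lemma path_lt (x : 'I_4) p : path (edge_rel Rm0 Rp0) x p -> (x <= last x p)%N.
Proof.
elim: p x => [|y p IH] x //= /andP [h hp].
exact: leq_trans (ltnW (lt_edge h)) (IH y hp).
Qed.

Lemma acy0 : acyclic Rm0 Rp0.
Proof.
move=> x y h; apply/negP => /connectP [p hp ex].
by have := path_lt hp; rewrite -ex leqNgt (lt_edge h).
Qed.

Lemma multi0 : multifold Rm0 Rp0 n3 (n0, n1).
Proof.
split; first by rewrite !inE.
- by [].
- by [].
exists [:: n3], [:: n2; n3]; split => //; by rewrite /is_path_to /= /edge_rel !inE.
Qed.

Section Ex.
Variable S : {set 'I_4 * 'I_4}.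
Hypothesis hS : S \subset (Rm0 :|: Rp0) :\ (n0, n1).

Lemma hS01 : ((n0, n1) \in S) = false.
Proof. apply/negbTE/negP => /(subsetP hS); by rewrite !inE eqxx. Qed.

Lemma pat0 b g : pat (Rm0 :&: S :|: Rp0 :&: S) n3 b g = false.
Proof.
apply/negbTE/negP => /and3P [h1 h2 /existsP [x h3]]; move: h1 h2 h3.
rewrite !inE.
case: (ord4 b) => ->; case: (ord4 g) => ->; case: (ord4 x) => -> //=;
  by rewrite ?hS01 ?andbF.
Qed.

Lemma pat1 b g : pat (Rm0 :&: ((n0, n1) |: S) :|: Rp0 :&: ((n0, n1) |: S)) n3 b g =
  [&& b == n0, g == n1, (n1, n2) \in S & (n1, n3) \in S].
Proof.
apply/idP/idP.
  move=> /and3P [h1 h2 /existsP [x h3]]; move: h1 h2 h3.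
  rewrite !inE.
  case: (ord4 b) => ->; case: (ord4 g) => ->; case: (ord4 x) => -> //=;
    rewrite ?hS01 ?andbF //=; intros; repeat match goal with H : is_true (_ && _) |- _ => move/andP: H => [? ?] end; try (apply/andP; split); done.
move=> /andP [/eqP -> /andP [/eqP -> /andP [h12 h13]]]; apply/and3P; split.
- by rewrite !inE.
- by rewrite !inE h13.
- apply/existsP; exists n2; by rewrite !inE h12.
Qed.
End Ex.

Lemma ex1 (S : {set 'I_4 * 'I_4}) (hS : S \subset (Rm0 :|: Rp0) :\ (n0, n1)) (Q : pred 'I_4) :
  [exists b, exists g, pat (Rm0 :&: ((n0, n1) |: S) :|: Rp0 :&: ((n0, n1) |: S)) n3 b g && Q b]
  = [&& (n1, n2) \in S, (n1, n3) \in S & Q n0].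
Proof.
apply/existsP/idP.
  case=> b /existsP [g]; rewrite pat1 //.
  by move=> /andP [/andP [/eqP -> /andP [_ /andP [-> ->]]] ->].
move=> /and3P [h12 h13 hq]; exists n0; apply/existsP; exists n1.
by rewrite pat1 // eqxx h12 h13 hq.
Qed.

Lemma ex0 (S : {set 'I_4 * 'I_4}) (hS : S \subset (Rm0 :|: Rp0) :\ (n0, n1)) (Q : pred 'I_4) :
  [exists b, exists g, pat (Rm0 :&: S :|: Rp0 :&: S) n3 b g && Q b] = false.
Proof.
apply/negbTE/existsPn => b; apply/existsPn => g; by rewrite pat0.
Qed.

Definition cval (R : realType) (tau : 'I_4 -> R) : R :=
  ((2^-1 < tau n0)%R : bool)%:R - ((tau n0 < 2^-1)%R : bool)%:R.

Definition wt (R : realType) (S : {set 'I_4 * 'I_4}) : R :=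
  ((#|Rm0 :|: Rp0| - #|S| - 1)`! * #|S|`!)%:R / (#|Rm0 :|: Rp0|`!)%:R.

Definition K (R : realType) : R :=
  \sum_(S : {set 'I_4 * 'I_4} | S \subset (Rm0 :|: Rp0) :\ (n0, n1))
    wt R S * ([&& (n1, n2) \in S & (n1, n3) \in S] : bool)%:R.

Lemma RAE_eq (R : realType) (tau : 'I_4 -> R) :
  RAE (@mysem R) Rm0 Rp0 tau n3 (n0, n1) = cval tau / 4 * K R.
Proof.
rewrite /RAE /= /K mulr_sumr; apply: eq_bigr => S hS.
rewrite /sigma_S /mysem /sgnp ex1 // ex1 // !ex0 // /cval /wt.
case: ((n1, n2) \in S); case: ((n1, n3) \in S) => /=; rewrite ?mulr0 ?mulr1; lra.
Qed.

Lemma K_gt0 (R : realType) : 0 < K R.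
Proof.
have hw : forall S, 0 < wt R S.
  by move=> S; apply: divr_gt0; rewrite ltr0n ?muln_gt0 !fact_gt0.
rewrite /K (bigD1 (Rp0 :\ (n0, n1))) /=; last by rewrite /Rm0 set0U subxx.
have -> : [&& (n1, n2) \in Rp0 :\ (n0, n1) & (n1, n3) \in Rp0 :\ (n0, n1)] by rewrite !inE.
rewrite mulr1; apply: ltr_wpDr; last exact: hw.
apply: sumr_ge0 => S _; apply: mulr_ge0; [exact: ltW | exact: ler0n].
Qed.

Theorem proposition12 (R : realType) :
  exists sigma : semantics R,
    sem_range sigma /\ monotonic_acyclic sigma /\
    exists (A : finType) (Rm Rp : {set A * A}) (tau : A -> R),
      qbaf_valid Rm Rp tau /\ acyclic Rm Rp /\
      exists (a : A) (r : A * A),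
        multifold Rm Rp a r /\
        let phi := RAE sigma Rm Rp tau a r in
        let phi_d := fun d : R => RAE sigma Rm Rp (tau_upd tau r.1 d) a r in
        ((0 < phi /\ exists d : R, 0 <= d <= 1 /\ phi_d d < 0) \/
         (phi < 0 /\ exists d : R, 0 <= d <= 1 /\ 0 < phi_d d)).
Proof.
exists (@mysem R); split; first exact: mysem_range.
split; first exact: mysem_mono.
exists 'I_4, Rm0, Rp0, (fun _ => 1).
split.
  split; first by rewrite /Rm0 set0I.
  by move=> _; rewrite ler01 lexx.
split; first exact: acy0.
exists n3, (n0, n1); split; first exact: multi0.
move=> /=; left; split.
  rewrite RAE_eq /cval; have := K_gt0 R.
  have -> : ((2^-1 : R) < 1) by lra.
  have -> : ((1 : R) < 2^-1) = false by apply/negbTE; rewrite -leNgt; lra.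
  move=> h; rewrite /=; lra.
exists 0; split; first by rewrite lexx ler01.
rewrite RAE_eq /cval /tau_upd eqxx; have := K_gt0 R.
have -> : ((2^-1 : R) < 0) = false by apply/negbTE; rewrite -leNgt; lra.
have -> : ((0 : R) < 2^-1) by lra.
move=> h; rewrite /=; lra.
Qed.
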